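(* If $\mathcal Q$ is a countable collection of probability measures on $\{0,1\}^{\mathbb N}$, then $\mathcal Q$ is UME-learnable.
   Context: $\{0,1\}^{\mathbb N}$ carries the product $\sigma$-algebra. For a probability measure $\mu$ on $\{0,1\}^{\mathbb N}$, $\mathrm{Mean}(\mu)\in[0,1]^{\mathbb N}$ is the vector whose $j$-th coordinate is $\mathbb E[X_j]$ for $X\sim\mu$. A collection $\mathcal Q$ of such measures is UME-learnable if there exist (measurable) estimators $\mathcal A_n:(\{0,1\}^{\mathbb N})^n\to[0,1]^{\mathbb N}$, $n\in\mathbb N$, such that for every $\mu\in\mathcal Q$, $\mathbb E_{S\sim\mu^n}\|\mathcal A_n(S)-\mathrm{Mean}(\mu)\|_\infty\to0$ as $n\to\infty$, where $S$ consists of $n$ i.i.d. draws from $\mu$. *)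

(* Defs.v *)
From HB Require Import structures.
From mathcomp Require Import all_boot all_order all_algebra.
From mathcomp Require Import all_classical all_reals all_analysis.
Set Implicit Arguments. Unset Strict Implicit. Unset Printing Implicit Defensive.
Import Order.TTheory GRing.Theory Num.Theory.
Import numFieldNormedType.Exports.
Local Open Scope classical_set_scope.
Local Open Scope ring_scope.

(** Product sigma-algebra on bit strings [I -> bool] (bool carrying the
    discrete sigma-algebra): generated by the coordinate cylinders
    [{x | x i = true}], i.e. by the coordinate projections. *)
Definition cyl_sets (I : Type) : set (set (I -> bool)) :=
  [set [set x : I -> bool | x i] | i in [set: I]].

Definition Cantor : Type := g_sigma_algebraType (@cyl_sets nat).

Definition Mean (R : realType) (mu : probability Cantor R) (j : nat) : R :=
  fine (\int[mu]_x (((x : nat -> bool) j)%:R : R)%:E).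

Definition sample (n : nat) : Type := 'I_n -> nat -> bool.

Definition sample_sets (n : nat) : set (set (sample n)) :=
  [set [set S : sample n | S ij.1 ij.2] | ij in [set: 'I_n * nat]].

(** Measurability of an estimator A : ({0,1}^N)^n -> [0,1]^N, where the
    codomain carries the product (Borel) sigma-algebra: every coordinate
    map S |-> A S j is measurable. *)
Definition estimator_measurable (R : realType) (n : nat)
    (A : sample n -> nat -> R) : Prop :=
  forall (j : nat) (B : set R), measurable B ->
    <<s @sample_sets n >> ((fun S => A S j) @^-1` B).

Definition supdist (R : realType) (v w : nat -> R) : \bar R :=
  ereal_sup (range (fun j => (`|v j - w j|)%:E)).

Definition scons (T : Type) (x : T) (s : nat -> T) : nat -> T :=
  fun k => if k is k'.+1 then s k' else x.

(** Expectation under the n-fold product mu^n of a nonnegative functional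
    F of the first n draws s 0, ..., s (n-1), computed as the iterated
    integral (Tonelli):
      E_{mu^n}[F] = \int mu(dx_0) ... \int mu(dx_{n-1}) F(x_0,...,x_{n-1}). *)
Fixpoint expect_n (R : realType) (mu : probability Cantor R) (n : nat)
    (F : (nat -> Cantor) -> \bar R) : \bar R :=
  match n with
  | 0 => F (fun _ => (fun _ => false) : Cantor)
  | n'.+1 => \int[mu]_x expect_n mu n' (fun s => F (scons x s))
  end.

Definition first_n (n : nat) (s : nat -> Cantor) : sample n :=
  fun i : 'I_n => (s (nat_of_ord i) : nat -> bool).

Definition UME_learnable (R : realType) (Q : set (probability Cantor R)) : Prop :=
  exists A : forall n : nat, sample n -> nat -> R,
    (forall n, estimator_measurable (A n)) /\
    (forall n S j, 0 <= A n S j <= 1) /\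
    (forall mu, Q mu ->
       (fun n => expect_n mu n (fun s => supdist (A n (@first_n n s)) (Mean mu)))
         @ \oo --> 0%E).

(* Main.v *)
From Stdlib Require Import PeanoNat.
Require Import Defs.
From HB Require Import structures.
From mathcomp Require Import all_boot all_order all_algebra.
From mathcomp Require Import all_classical all_reals all_analysis.
From mathcomp Require Import measurable_realfun.
Import Order.TTheory GRing.Theory Num.Theory.
Local Open Scope classical_set_scope.
Local Open Scope ring_scope.

Lemma fin_dep_meas (X : pointedType) (K : eqType) (co : K -> X -> bool)
  (upd : X -> K -> bool -> X) (G : set (set X)) :
  (forall k x b, co k (upd x k b) = b) ->
  (forall k k' x b, k' != k -> co k' (upd x k b) = co k' x) ->
  (forall k, G [set x | co k x]) ->
  forall (L : seq K) (T : Type) (f : X -> T),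
  (forall x y, (forall k, k \in L -> co k x = co k y) -> f x = f y) ->
  forall B : set T, <<s G >> (f @^-1` B).
Proof.
move=> hupd1 hupd2 hG L; elim: L => [|k L IH] T f hf B.
  have [[x0 Bx0]|nB] := pselect (exists x, B (f x)).
    have -> : f @^-1` B = setT.
      by apply/seteqP; split => // x _; rewrite /preimage/= (hf x x0).
    exact: (@measurableT _ (g_sigma_algebraType G)).
  have -> : f @^-1` B = set0.
    by apply/seteqP; split => // x /= Bx; apply: nB; exists x.
  exact: (@measurable0 _ (g_sigma_algebraType G)).
pose fb b := fun x => f (upd x k b).
have hfb b : forall x y, (forall k', k' \in L -> co k' x = co k' y) -> fb b x = fb b y.
  move=> x y hxy; apply: hf => k'; rewrite inE => /orP[/eqP ->|kL].
    by rewrite !hupd1.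
  have [->|nk] := eqVneq k' k; first by rewrite !hupd1.
  by rewrite !hupd2 // hxy.
have fE : forall x, f x = fb (co k x) x.
  move=> x; apply: hf => k' _; have [->|nk] := eqVneq k' k; first by rewrite hupd1.
  by rewrite hupd2.
have -> : f @^-1` B = ([set x | co k x] `&` (fb true @^-1` B)) `|`
                      (~` [set x | co k x] `&` (fb false @^-1` B)).
  apply/seteqP; split => x /=.
    by rewrite fE; case: (co k x) => Bx; [left|right].
  by rewrite fE => -[[-> //]|[/negP/negbTE -> //]].
have mk : <<s G >> [set x | co k x] by apply: sub_sigma_algebra.
apply: (@measurableU _ (g_sigma_algebraType G)); apply: (@measurableI _ (g_sigma_algebraType G)).
  exact: mk.
  exact: (IH _ _ (hfb true)).
  exact: (@measurableC _ (g_sigma_algebraType G)).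
exact: (IH _ _ (hfb false)).
Qed.

Definition updC (x : nat -> bool) (k : nat) (b : bool) : nat -> bool :=
  fun k' => if k' == k then b else x k'.

Lemma cantor_meas (T : Type) (L : seq nat) (f : Cantor -> T) :
  (forall x y : Cantor, (forall k, k \in L -> (x : nat -> bool) k = (y : nat -> bool) k) -> f x = f y) ->
  forall B : set T, measurable (f @^-1` B).
Proof.
move=> hf B.
apply: (@fin_dep_meas (nat -> bool) nat (fun k x => x k) updC (@cyl_sets nat)) hf B.
- by move=> k x b; rewrite /updC eqxx.
- by move=> k k' x b /negbTE; rewrite /updC => ->.
- by move=> k; exists k.
Qed.

Lemma cantor_mfun (R : realType) (L : seq nat) (f : Cantor -> \bar R) :
  (forall x y : Cantor, (forall k, k \in L -> (x : nat -> bool) k = (y : nat -> bool) k) -> f x = f y) ->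
  measurable_fun setT f.
Proof. move=> hf _ B _; rewrite setTI; exact: (@cantor_meas (\bar R) L f hf B). Qed.

Section Integ.
Variable R : realType.
Variable mu : probability Cantor R.
Local Open Scope ereal_scope.

Definition pr (j : nat) : R := fine (mu [set x : Cantor | (x : nat -> bool) j]).

Lemma mcyl j : measurable [set x : Cantor | (x : nat -> bool) j].
Proof. by apply: sub_sigma_algebra; exists j. Qed.

Lemma muE j : mu [set x : Cantor | (x : nat -> bool) j] = (pr j)%:E.
Proof.
rewrite /pr fineK // ge0_fin_numE ?measure_ge0 //.
by apply: le_lt_trans (probability_le1 _ (mcyl j)) _; rewrite ltey.
Qed.

Lemma pr_ge0 j : (0 <= pr j)%R.
Proof. by rewrite -lee_fin -muE measure_ge0. Qed.

Lemma pr_le1 j : (pr j <= 1)%R.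
Proof. by rewrite -lee_fin -muE probability_le1 //; exact: mcyl. Qed.

Lemma int_bit j (h : bool -> R) : (forall b, 0 <= h b)%R ->
  \int[mu]_x (h ((x : nat -> bool) j))%:E = (h true * pr j + h false * (1 - pr j))%:E.
Proof.
move=> h0.
set A := [set x : Cantor | (x : nat -> bool) j].
have -> : (fun x : Cantor => (h ((x : nat -> bool) j))%:E) =
   (fun x => (h true)%:E * (\1_A x)%:E + (h false)%:E * (\1_(~` A) x)%:E).
  apply/funext => x; rewrite !indicE.
  case hx : ((x : nat -> bool) j).
    have xA : A x by rewrite /A /= hx.
    have nxA : ~ (~` A) x by move/(_ xA).
    rewrite (mem_set xA) (memNset nxA) /=.
    by rewrite mule1 mule0 adde0.
  have xA : (~` A) x by rewrite /A /= hx.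
  rewrite (mem_set xA) (memNset xA) /=.
  by rewrite mule1 mule0 add0e.
have mA : measurable A by exact: mcyl.
have mAC : measurable (~` A) by exact: measurableC.
have ext : forall x y : Cantor, (forall k, k \in [:: j] -> (x : nat -> bool) k = (y : nat -> bool) k) ->
   (x \in A) = (y \in A).
  move=> x y hxy; have e := hxy j (mem_head _ _).
  by apply/idP/idP => /set_mem; rewrite /A /= ?e => H; apply/mem_set; rewrite /= ?e.
have extC : forall x y : Cantor, (forall k, k \in [:: j] -> (x : nat -> bool) k = (y : nat -> bool) k) ->
   (x \in ~` A) = (y \in ~` A).
  move=> x y hxy; have e := hxy j (mem_head _ _).
  by apply/idP/idP => /set_mem; rewrite /A /= ?e => H; apply/mem_set; rewrite /= ?e.
have m1 : measurable_fun [set: Cantor] (fun x : Cantor => (h true)%:E * (\1_A x)%:E).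
  by apply: (@cantor_mfun R [:: j]) => x y hxy; rewrite !indicE (ext x y hxy).
have m2 : measurable_fun [set: Cantor] (fun x : Cantor => (h false)%:E * (\1_(~` A) x)%:E).
  by apply: (@cantor_mfun R [:: j]) => x y hxy; rewrite !indicE (extC x y hxy).
have m1' : measurable_fun [set: Cantor] (fun x : Cantor => (\1_A x : R)%:E).
  by apply: (@cantor_mfun R [:: j]) => x y hxy; rewrite !indicE (ext x y hxy).
have m2' : measurable_fun [set: Cantor] (fun x : Cantor => (\1_(~` A) x : R)%:E).
  by apply: (@cantor_mfun R [:: j]) => x y hxy; rewrite !indicE (extC x y hxy).
rewrite ge0_integralD //; last 2 first.
  by move=> x _; rewrite mule_ge0 // lee_fin.
  by move=> x _; rewrite mule_ge0 // lee_fin.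
rewrite !ge0_integralZl_EFin //.
rewrite !integral_indic // !setIT.
have hC : mu (~` A) = (1 - mu A)%E by exact: probability_setC.
rewrite [X in _ + _ * X]hC [X in _ * (1 - X)]muE [X in _ * X + _]muE.
by rewrite -EFinB -!EFinM -EFinD.
Qed.

Lemma MeanE j : Mean mu j = pr j.
Proof.
rewrite /Mean.
have -> := @int_bit j (fun b : bool => (b%:R : R)) (fun b => ler0n _ _).
by rewrite /= mul1r mul0r addr0.
Qed.

Lemma expect_ge0 n (F : (nat -> Cantor) -> \bar R) :
  (forall s, 0 <= F s) -> 0 <= expect_n mu n F.
Proof.
elim: n F => [|n IH] F F0 /=; first exact: F0.
by apply: integral_ge0 => x _; apply: IH => s.
Qed.

Lemma expect_le n (F G : (nat -> Cantor) -> \bar R) :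
  (forall s, 0 <= F s) -> (forall s, F s <= G s) -> expect_n mu n F <= expect_n mu n G.
Proof.
elim: n F G => [|n IH] F G F0 FG /=; first exact: FG.
have G0 : forall s, 0 <= G s by move=> s; exact: le_trans (F0 s) (FG s).
rewrite !ge0_integralTE; [|by move=> x; apply: expect_ge0..].
apply: le_ereal_sup => _ [h hF <-]; exists h => //= x.
apply: le_trans (hF x) _; exact: IH.
Qed.

End Integ.

Arguments pr {R} mu j.
From mathcomp Require Import ring lra zify.

Section Quad.
Variable R : realType.
Variable mu : probability Cantor R.
Variable d : nat.
Variable a : nat -> R.
Local Open Scope ereal_scope.

Definition Zf (j : nat) (x : Cantor) : R := (a j * (((x : nat -> bool) j)%:R - pr mu j))%R.
Definition Vq : R := (\sum_(j < d) a j ^+ 2 * (pr mu j * (1 - pr mu j)))%R.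

Lemma int_term (c : R) j :
  \int[mu]_x ((c + Zf j x) ^+ 2)%:E = (c ^+ 2 + a j ^+ 2 * (pr mu j * (1 - pr mu j)))%:E.
Proof.
have := @int_bit R mu j (fun b : bool => (c + a j * (b%:R - pr mu j)) ^+ 2)%R (fun b => sqr_ge0 _).
rewrite /Zf => ->; congr (_%:E); rewrite /=; ring.
Qed.

Lemma quad n : forall c : nat -> R,
  expect_n mu n (fun s => (\sum_(j < d) (c j + \sum_(i < n) Zf j (s i)) ^+ 2)%:E)
  = (\sum_(j < d) c j ^+ 2 + n%:R * Vq)%:E.
Proof.
elim: n => [|n IH] c /=.
  by rewrite mul0r addr0; congr (_%:E); apply: eq_bigr => j _; rewrite big_ord0 addr0.
transitivity (\int[mu]_x (\sum_(j < d) (c j + Zf j x) ^+ 2 + n%:R * Vq)%:E).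
  apply: eq_integral => x _; rewrite -(IH (fun j => c j + Zf j x)%R).
  congr (expect_n mu n _); apply/funext => s; congr (_%:E).
  by apply: eq_bigr => j _; rewrite big_ord_recl /= addrA.
have mZ : forall j, (j < d)%N -> forall x y : Cantor,
    (forall k, k \in iota 0 d -> (x : nat -> bool) k = (y : nat -> bool) k) -> Zf j x = Zf j y.
  by move=> j jd x y hxy; rewrite /Zf hxy // mem_iota.
under eq_integral => x _ do rewrite EFinD.
rewrite ge0_integralD //; last 3 first.
- by move=> x _; rewrite lee_fin sumr_ge0 // => j _; exact: sqr_ge0.
- apply: (@cantor_mfun R (iota 0 d)) => x y hxy; congr (_%:E).
  by apply: eq_bigr => j _; rewrite (mZ j (ltn_ord j) x y hxy).
- by move=> x _; rewrite lee_fin mulr_ge0 // sumr_ge0 // => j _; rewrite mulr_ge0 ?sqr_ge0 ?mulr_ge0 ?subr_ge0 ?pr_ge0 ?pr_le1.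
rewrite integral_cst // [X in (_ * X)%E](_ : _ = 1%E) ?mule1; last exact: probability_setT.
under eq_integral => x _ do rewrite -sumEFin.
rewrite ge0_integral_sum //; last 2 first.
- move=> j; apply: (@cantor_mfun R (iota 0 d)) => x y hxy; congr (_%:E).
  by rewrite (mZ j (ltn_ord j) x y hxy).
- by move=> j x _; rewrite lee_fin sqr_ge0.
rewrite (eq_bigr (fun j : 'I_d => ((c j) ^+ 2 + a j ^+ 2 * (pr mu j * (1 - pr mu j)))%R%:E)); last by move=> j _; exact: int_term.
rewrite sumEFin -EFinD big_split /= -/Vq; congr (_%:E).
rewrite -nat1r mulrDl mul1r; ring.
Qed.

End Quad.
Arguments Zf {R} mu a j x.
Arguments Vq {R} mu d a.

Definition rr (n : nat) : nat := Nat.sqrt (Nat.sqrt n).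

Lemma rr_pow n : (rr n * rr n * (rr n * rr n) <= n)%N.
Proof.
rewrite /rr; have [h1 _] := Nat.sqrt_spec (Nat.sqrt n) (Nat.le_0_l _).
have [h2 _] := Nat.sqrt_spec n (Nat.le_0_l _).
set a := Nat.sqrt (Nat.sqrt n) in h1 *; set b := Nat.sqrt n in h1 h2 *.
nia.
Qed.

Lemma rr_large K : exists N, forall n, (N <= n)%N -> (K <= rr n)%N.
Proof.
exists (K * K * (K * K))%N => n hn.
rewrite /rr; have := Nat.sqrt_le_mono _ _ (Nat.sqrt_le_mono _ _ (ssrnat.leP hn)).
rewrite !Nat.sqrt_square => /ssrnat.leP //.
Qed.

Section Est.
Variable R : realType.
Variable M : nat -> nat -> R.

Definition emp {n} (S : sample n) (j : nat) : R := (\sum_(i < n) ((S i j)%:R : R)) / n%:R.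
Definition pass {n} (S : sample n) (l : nat) : bool :=
  all (fun j => `|emp S j - M l j| <= (rr n)%:R^-1) (iota 0 (rr n)).
Definition sel {n} (S : sample n) : nat := find (pass S) (iota 0 (rr n)).
Definition est {n} (S : sample n) (j : nat) : R :=
  if (sel S < rr n)%N then M (sel S) j else 0.

Definition updS n (S : 'I_n -> nat -> bool) (ij : 'I_n * nat) (b : bool) : 'I_n -> nat -> bool :=
  fun i j => if (i == ij.1) && (j == ij.2) then b else S i j.

Lemma est_meas n : estimator_measurable (@est n).
Proof.
move=> j B _.
apply: (@fin_dep_meas ('I_n -> nat -> bool) _
  (fun ij S => S ij.1 ij.2) (@updS n) (@sample_sets n) _ _ _
  [seq (i, k) | i <- enum 'I_n, k <- iota 0 (rr n)]).
  by move=> [i k] S b; rewrite /updS /= !eqxx.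
  move=> [i k] [i' k'] S b; rewrite /updS /= xpair_eqE => /negbTE ->. by [].
  by move=> [i k]; exists (i, k).
move=> S S' hS.
have he : forall k, (k < rr n)%N -> emp S k = emp S' k.
  move=> k hk; rewrite /emp; congr (_ / _); apply: eq_bigr => i _.
  rewrite (hS (i, k)) //; apply/allpairsP; exists (i, k); split => //.
    by rewrite mem_enum.
  by rewrite mem_iota.
have hp : pass S =1 pass S'.
  move=> l; apply: eq_in_all => k; rewrite mem_iota => /andP[_ hk].
  by rewrite he.
by rewrite /est /sel (eq_find hp).
Qed.
End Est.
Arguments emp {R n} S j.
Arguments pass {R} M {n} S l.
Arguments sel {R} M {n} S.
Arguments est {R} M {n} S j.

Section Sep.
Variable R : realType.
Variable M : nat -> nat -> R.
Variable k0 : nat.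

Lemma sep1 l : exists r0 : nat, forall r : nat, (r0 <= r)%N ->
  (forall j, (j < r)%N -> `|M l j - M k0 j| <= 2 / r%:R) -> M l = M k0.
Proof.
have [->|neq] := pselect (M l = M k0); first by exists 0%N.
have [j hj] : exists j, M l j != M k0 j.
  apply: contrapT => H; apply: neq; apply/funext => j; apply/eqP/negPn/negP => hj; apply: H; exists j; exact: hj.
pose del : R := `|M l j - M k0 j|.
have del0 : 0 < del by rewrite normr_gt0 subr_eq0.
exists (maxn j.+1 (Num.trunc (2 / del)).+1) => r; rewrite geq_max => /andP[jr tr] H.
have := H j jr; rewrite -/del => hd.
have r0 : (0 < r%:R :> R) by rewrite ltr0n; apply: leq_trans jr.
have : 2 / del < r%:R.
  apply: lt_le_trans (truncnS_gt _) _; rewrite ler_nat //.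
move: hd; rewrite ler_pdivlMr // => hd.
rewrite ltr_pdivrMr // => hc.
by move: hd; rewrite mulrC leNgt hc.
Qed.

Lemma sep K : exists r0 : nat, forall r : nat, (r0 <= r)%N -> forall l, (l <= K)%N ->
  (forall j, (j < r)%N -> `|M l j - M k0 j| <= 2 / r%:R) -> M l = M k0.
Proof.
elim: K => [|K [r1 IH]].
  have [r0 H] := sep1 0; exists r0 => r hr l; rewrite leqn0 => /eqP ->; exact: H.
have [r2 H] := sep1 K.+1; exists (maxn r1 r2) => r; rewrite geq_max => /andP[h1 h2] l.
rewrite leq_eqVlt => /orP[/eqP ->|]; first exact: H.
rewrite ltnS; exact: IH.
Qed.
End Sep.

Section Key.
Variable R : realType.
Variable mu : probability Cantor R.
Variable M : nat -> nat -> R.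
Variable k0 : nat.
Hypothesis hk0 : M k0 = Mean mu.
Hypothesis Mr : forall l j, 0 <= M l j <= 1.

Lemma est_range n (S : sample n) j : 0 <= est M S j <= 1.
Proof. by rewrite /est; case: ifP => _ //; rewrite lexx ler01. Qed.

Lemma Mean_range j : 0 <= Mean mu j <= 1.
Proof. by rewrite MeanE pr_ge0 pr_le1. Qed.

Lemma key n (s : nat -> Cantor) r0 :
  (forall r, (r0 <= r)%N -> forall l, (l <= k0)%N ->
     (forall j, (j < r)%N -> `|M l j - M k0 j| <= 2 / r%:R) -> M l = M k0) ->
  (r0 <= rr n)%N -> (k0 < rr n)%N ->
  (supdist (est M (@first_n n s)) (Mean mu) <=
   (\sum_(j < rr n) ((fun _ => 0) j + \sum_(i < n) Zf mu (fun _ => (rr n)%:R / n%:R) j (s i)) ^+ 2)%:E)%E.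
Proof.
move=> hsep hr0 hk0r.
set r := rr n in hr0 hk0r *; set S := @first_n n s.
have r0p : (0 < r)%N by apply: leq_ltn_trans hk0r.
have n0 : (0 < n)%N.
  have := rr_pow n; rewrite -/r; move: r0p; clear; lia.
have rR0 : (0 < r%:R :> R) by rewrite ltr0n.
have nR0 : (0 < n%:R :> R) by rewrite ltr0n.
have sumZ : forall j, \sum_(i < n) Zf mu (fun _ => r%:R / n%:R) j (s i) = r%:R * (emp S j - Mean mu j).
  move=> j; rewrite /Zf /emp MeanE -big_distrr /= sumrB sumr_const card_ord.
  rewrite /S /first_n /=; field; exact: lt0r_neq0.
have rhs0 : (0 <= \sum_(j < r) ((fun _ => 0) j + \sum_(i < n) Zf mu (fun _ => r%:R / n%:R) j (s i)) ^+ 2)%R.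
  by apply: sumr_ge0 => j _; exact: sqr_ge0.
case: (boolP (all (fun j => `|emp S j - Mean mu j| <= r%:R^-1) (iota 0 r))) => good.
  have pk0 : pass M S k0 by rewrite /pass hk0.
  have hsel : (sel M S <= k0)%N.
    rewrite leqNgt; apply/negP => lt; have := before_find 0%N lt.
    by rewrite nth_iota // add0n -/r => hp; move: pk0; rewrite hp.
  have selr : (sel M S < r)%N by apply: leq_ltn_trans hsel hk0r.
  have psel : pass M S (sel M S).
    have hh : has (pass M S) (iota 0 r) by rewrite has_find size_iota.
    by have := nth_find 0%N hh; rewrite nth_iota ?size_iota // add0n.
  have eqM : M (sel M S) = M k0.
    apply: (hsep r hr0) => // j jr.
    have j1 := allP psel j; have j2 := allP good j.
    rewrite mem_iota add0n jr /= in j1 j2.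
    have {}j1 := j1 isT; have {}j2 := j2 isT; rewrite -hk0 in j2.
    apply: le_trans (ler_distD (emp S j) _ _) _.
    rewrite distrC (_ : 2 / r%:R = r%:R^-1 + r%:R^-1); last by field; exact: lt0r_neq0.
    exact: lerD.
  apply: ge_ereal_sup => _ [j _ <-]; rewrite lee_fin.
  by rewrite /est -/r selr eqM hk0 subrr normr0.
move: good; rewrite -has_predC => /hasP[j jr /= bad].
rewrite mem_iota leq0n add0n /= in jr.
apply: (@le_trans _ _ 1%E).
  apply: ge_ereal_sup => _ [j' _ <-]; rewrite lee_fin.
  have := @est_range n S j'; have := Mean_range j'.
  move=> /andP[a1 a2] /andP[b1 b2]; rewrite ler_norml; apply/andP; split; lra.
rewrite lee_fin (bigD1 (Ordinal jr)) //=.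
rewrite -ltNge in bad.
have h1 : 1 < r%:R * `|emp S j - Mean mu j|.
  by rewrite -ltr_pdivrMl // mulr1.
have hterm : 1 <= (0 + \sum_(i < n) Zf mu (fun=> r%:R / n%:R) j (s i)) ^+ 2.
  rewrite add0r sumZ; set t := emp S j - Mean mu j in h1 *.
  have ht : 1 <= `|r%:R * t| by rewrite normrM ger0_norm ?ler0n // ltW.
  rewrite -[_ ^+ 2]ger0_norm ?sqr_ge0 // normrX.
  move: ht; set u := `|r%:R * t| => ht; nra.
apply: le_trans hterm _; rewrite lerDl.
by apply: sumr_ge0 => i _; exact: sqr_ge0.
Qed.

Lemma expect_bound n r0 :
  (forall r, (r0 <= r)%N -> forall l, (l <= k0)%N ->
     (forall j, (j < r)%N -> `|M l j - M k0 j| <= 2 / r%:R) -> M l = M k0) ->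
  (r0 <= rr n)%N -> (k0 < rr n)%N ->
  (expect_n mu n (fun s => supdist (est M (@first_n n s)) (Mean mu)) <= ((rr n)%:R^-1)%:E)%E.
Proof.
move=> hsep hr0 hk0r.
have F0 : forall s, (0 <= supdist (est M (@first_n n s)) (Mean mu))%E.
  move=> s; apply: le_trans (ereal_sup_ubound _); last by exists 0%N.
  by rewrite lee_fin.
apply: (le_trans (@expect_le R mu n _ _ F0 (fun s => @key n s r0 hsep hr0 hk0r))).
rewrite (@quad R mu (rr n) (fun _ => (rr n)%:R / n%:R) n (fun _ => 0)) lee_fin big1 ?add0r; last by move=> j _; rewrite expr0n.
set r := rr n in hr0 hk0r *.
have r0p : (0 < r)%N by apply: leq_ltn_trans hk0r.
have hp := rr_pow n; rewrite -/r in hp.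
have n0 : (0 < n)%N by move: r0p hp; clear; lia.
have rR0 : (0 < r%:R :> R) by rewrite ltr0n.
have nR0 : (0 < n%:R :> R) by rewrite ltr0n.
have hV : Vq mu r (fun=> r%:R / n%:R) <= r%:R * (r%:R / n%:R) ^+ 2.
  rewrite /Vq; apply: le_trans (_ : \sum_(j < r) (r%:R / n%:R) ^+ 2 <= _).
    apply: ler_sum => j _; apply: ler_piMr; first exact: sqr_ge0.
    have := @pr_ge0 R mu j; have := @pr_le1 R mu j; move=> a b; nra.
  by rewrite sumr_const card_ord [in X in _ <= X]mulr_natl.
apply: le_trans (_ : n%:R * (r%:R * (r%:R / n%:R) ^+ 2) <= _).
  by rewrite ler_pM2l.
have hp' : r%:R ^+ 4 <= n%:R :> R.
  by rewrite -natrX ler_nat; move: hp; clear; rewrite (_ : r ^ 4 = r * r * (r * r))%N //; lia.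
rewrite (_ : n%:R * (r%:R * (r%:R / n%:R) ^+ 2) = (r%:R ^+ 4 / n%:R) * r%:R^-1); last first.
  by field; rewrite !lt0r_neq0.
apply: ler_piMl; first by rewrite invr_ge0 ler0n.
by rewrite ler_pdivrMr // mul1r.
Qed.
End Key.

Lemma rr_inv_cvg (R : realType) : (fun n => ((rr n)%:R^-1 : R)) @ \oo --> 0.
Proof.
apply/cvgrPdist_le => e e0.
have [N HN] := rr_large (Num.trunc (e^-1)).+1.
exists N => // n /= hn; rewrite sub0r normrN ger0_norm ?invr_ge0 ?ler0n //.
have h := HN n hn.
have : e^-1 < (rr n)%:R.
  apply: lt_le_trans (truncnS_gt _) _; by rewrite ler_nat.
move=> h2; have rp : (0 < (rr n)%:R :> R) by apply: le_lt_trans h2; rewrite invr_ge0 ltW.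
rewrite -(invrK e) lef_pV2 ?posrE ?invr_gt0 //; exact: ltW.
Qed.

Theorem theorem1 (R : realType) (Q : set (probability Cantor R)) :
  countable Q -> UME_learnable Q.
Proof.
move=> /countable_injP [g ginj].
pose M (k j : nat) : R := match pselect (exists mu, Q mu /\ g mu = k) with
  | left e => Mean (projT1 (cid e)) j | right _ => 0%R end.
have Mr : forall l j, (0 <= M l j <= 1)%R.
  move=> l j; rewrite /M; case: pselect => [e|_]; last by rewrite lexx ler01.
  exact: Mean_range.
have MQ : forall mu, Q mu -> M (g mu) = Mean mu.
  move=> mu Qmu; apply/funext => j; rewrite /M; case: pselect => [e|ne]; last first.
    by exfalso; apply: ne; exists mu.
  case: (cid e) => mu' [Qmu' gmu'] /=.
  by rewrite (ginj mu' mu) // inE.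
exists (fun n => @est R M n); split; first by move=> n; exact: est_meas.
split; first by move=> n S j; move: (@est_range R M Mr n S j).
move=> mu Qmu.
have hk0 := MQ mu Qmu; set k0 := g mu in hk0.
have [r0 hsep] := @sep R M k0 k0.
have [N HN] := rr_large (maxn r0 k0.+1).
apply: (@squeeze_cvge _ _ _ _ (cst 0%E) _ (fun n => ((rr n)%:R^-1 : R)%:E)).
- exists N => // n /= hn; have := HN n hn; rewrite geq_max => /andP[h1 h2].
  apply/andP; split.
    apply: expect_ge0 => s; apply: le_trans (ereal_sup_ubound _); last by exists 0%N.
    by rewrite lee_fin.
  exact: (@expect_bound R mu M k0 hk0 Mr n r0 hsep h1 h2).
- exact: cvg_cst.
- apply: cvg_EFin; first by apply: nearW.
  exact: rr_inv_cvg.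
Qed.
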